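(* Let $n\ge 1$ and let $\underline x=(a_1,\ldots,a_m)$ and $\underline y=(b_1,\ldots,b_t)$ be compositions of $n$. Then the meander $M(\underline x\mid\underline y)$ is a single path (i.e. it is connected, has no cycles, and is a path through all $n$ vertices) if and only if the meander permutation $\sigma_{\underline x,\underline y}$ is an $n$-cycle in the symmetric group $S_n$.
   Context: A composition of $n$ is a sequence $(a_1,\ldots,a_m)$ of nonnegative integers with $\sum a_i=n$. The meander $M(\underline x\mid\underline y)$ is the graph on vertices $1,2,\ldots,n$ (placed in order on a horizontal line) with the following edges. Top edges: for each part $a_k$ of $\underline x$, with $s=a_1+\cdots+a_{k-1}$, join $s+j$ to $s+a_k+1-j$ for $1\le j\le\lfloor a_k/2\rfloor$ (drawn as arcs above the line). Bottom edges: the same construction using the parts $b_k$ of $\underline y$ (drawn as arcs below the line). The modified meander $M'(\underline x\mid\underline y)$ is obtained from $M(\underline x\mid\underline y)$ by adding, for each odd $a_k$, a top loop at vertex $a_1+\cdots+a_{k-1}+\lceil a_k/2\rceil$, and for each odd $b_k$, a bottom loop at vertex $b_1+\cdots+b_{k-1}+\lceil b_k/2\rceil$; thus every vertex of $M'$ is incident with exactly one top edge or top loop and exactly one bottom edge or bottom loop. The top bijection $t$ of $\{1,\ldots,n\}$ sends $i$ to the other endpoint of the top edge at $i$, and $t(i)=i$ if $i$ carries a top loop; the bottom bijection $b$ is defined analogously with bottom edges/loops. The meander permutation is $\sigma_{\underline x,\underline y}=t\circ b\in S_n$, i.e. $\sigma_{\underline x,\underline y}(i)=t(b(i))$. *)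

(* Defs.v *)
From mathcomp Require Import all_boot all_fingroup.
Set Implicit Arguments. Unset Strict Implicit. Unset Printing Implicit Defensive.

(* Vertices 1..n of the paper are encoded 0-indexed as 'I_n (vertex v <-> v+1).
   A composition is a seq nat (nonnegative parts) with sumn = n. *)

(* Reflection within the block of x containing v: a block occupying the
   0-indexed positions s, ..., s+a-1 sends v to 2s+a-1-v.  This is exactly
   the top/bottom bijection of the paper (centres of odd blocks, which carry
   the loops of M', are fixed). Vertices beyond sumn x are fixed. *)
Fixpoint block_refl (x : seq nat) (v : nat) : nat :=
  match x with
  | [::] => v
  | a :: x' => if v < a then a.-1 - v else a + block_refl x' (v - a)
  end.

Definition block_fun (n : nat) (x : seq nat) (i : 'I_n) : 'I_n :=
  insubd i (block_refl x i).

(* the meander permutation sigma = t o b as a function *)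
Definition meander_fun (n : nat) (x y : seq nat) (i : 'I_n) : 'I_n :=
  block_fun x (block_fun y i).

(* the meander permutation as an element of S_n; when x and y are
   compositions of n the function is injective, so this is the genuine
   permutation (the fallback 1 is never used under the theorem's hypotheses) *)
Definition meander_perm (n : nat) (x y : seq nat) : {perm 'I_n} :=
  match @idP (injectiveb (@meander_fun n x y)) with
  | ReflectT h => perm (injectiveP _ h)
  | ReflectF _ => 1%g
  end.

Definition is_full_cycle (n : nat) (s : {perm 'I_n}) : Prop :=
  forall i : 'I_n, porbit s i = [set: 'I_n].

(* Top and bottom arcs joining the same pair are kept as two parallel edges. *)
Definition arc_edges (n : nat) (x : seq nat) : seq {set 'I_n} :=
  [seq [set i; block_fun x i] | i : 'I_n <- enum 'I_n & (i < block_fun x i)%N].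

Definition meander_edges (n : nat) (x y : seq nat) : seq {set 'I_n} :=
  arc_edges n x ++ arc_edges n y.

Definition is_path_graph (n : nat) (E : seq {set 'I_n}) : Prop :=
  exists (v0 : 'I_n) (p : seq 'I_n),
    perm_eq (v0 :: p) (enum 'I_n) /\
    perm_eq E (pairmap (fun u v => [set u; v]) v0 p).

(* Main.v *)
Require Import Defs.
From mathcomp Require Import all_boot all_fingroup zify.
Set Implicit Arguments. Unset Strict Implicit. Unset Printing Implicit Defensive.

Lemma block_refl_lt x v : v < sumn x -> block_refl x v < sumn x.
Proof.
elim: x v => [|a x IH] v //=.
case: ifP => h hv; first by lia.
have := IH (v - a); lia.
Qed.

Lemma block_refl_inv x v : v < sumn x -> block_refl x (block_refl x v) = v.
Proof.
elim: x v => [|a x IH] v //= hv.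
case: (ltnP v a) => h /=.
  have -> : (a.-1 - v < a) = true by lia.
  lia.
have -> : (a + block_refl x (v - a) < a) = false by lia.
rewrite addKn IH; lia.
Qed.

Lemma bf_val n x (i : 'I_n) : sumn x = n -> val (block_fun x i) = block_refl x i.
Proof.
move=> hs; rewrite /block_fun val_insubd.
have := @block_refl_lt x i; rewrite hs => -> //.
Qed.

Lemma bf_inv n x : sumn x = n -> involutive (@block_fun n x).
Proof.
move=> hs i; apply: val_inj; rewrite !bf_val // block_refl_inv // hs; exact: ltn_ord.
Qed.

Lemma meander_permE n x y i : sumn x = n -> sumn y = n ->
  meander_perm n x y i = block_fun x (block_fun y i).
Proof.
move=> hx hy; rewrite /meander_perm; destruct (@idP (injectiveb (meander_fun x y))) as [h|h].
  by rewrite permE.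
exfalso; apply: h; apply/injectiveP => i1 j1; rewrite /meander_fun.
by move=> /(can_inj (bf_inv hx)) /(can_inj (bf_inv hy)).
Qed.

Lemma set2_eqE (T : finType) (a b c d : T) :
  [set a; b] = [set c; d] -> (a = c /\ b = d) \/ (a = d /\ b = c).
Proof.
move=> E.
have ha : a \in [set c; d] by rewrite -E set21.
have hb : b \in [set c; d] by rewrite -E set22.
have hc : c \in [set a; b] by rewrite E set21.
have hd : d \in [set a; b] by rewrite E set22.
move: ha hb hc hd; rewrite !inE.
do 4 (case/orP => /eqP ?); subst; auto.
Qed.

Section Generic.
Variable n : nat.

Definition arcs (f : 'I_n -> 'I_n) : seq {set 'I_n} :=
  [seq [set i; f i] | i : 'I_n <- enum 'I_n & (i < f i)%N].

Lemma arc_edgesE x : arc_edges n x = arcs (block_fun x). Proof. by []. Qed.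

Lemma mem_arcsP (f : 'I_n -> 'I_n) e :
  e \in arcs f -> exists u, f u != u /\ e = [set u; f u].
Proof.
move=> /mapP [u]; rewrite mem_filter mem_enum andbT => hu ->.
exists u; split => //; apply/eqP => h; move: hu; rewrite h ltnn //.
Qed.

Lemma arcs_mem (f : 'I_n -> 'I_n) u : involutive f -> f u != u -> [set u; f u] \in arcs f.
Proof.
move=> hf hu; case: (ltngtP u (f u)) => h.
- by apply/mapP; exists u; rewrite // mem_filter mem_enum h.
- apply/mapP; exists (f u); first by rewrite mem_filter mem_enum hf h.
  by rewrite hf setUC.
- by move: hu; rewrite -(val_inj h) eqxx.
Qed.

Lemma set_edge (f : 'I_n -> 'I_n) a b u : involutive f ->
  [set a; b] = [set u; f u] -> f a = b.
Proof. by move=> hf /set2_eqE [[-> ->]|[-> ->]] //; rewrite hf. Qed.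

Definition pm (w : nat -> 'I_n) := [seq [set w k; w k.+1] | k <- iota 0 n.-1].

Definition injn (w : nat -> 'I_n) := forall i j, i < n -> j < n -> w i = w j -> i = j.

Lemma inj_perm_enum w : injn w -> perm_eq [seq w i | i <- iota 0 n] (enum 'I_n).
Proof.
move=> hw.
have U : uniq [seq w i | i <- iota 0 n].
  rewrite map_inj_in_uniq ?iota_uniq // => i j; rewrite !mem_iota !add0n.
  by move=> /andP[_ hi] /andP[_ hj]; exact: hw.
apply: uniq_perm => //; first exact: enum_uniq.
have := @uniq_min_size _ _ (enum 'I_n) U.
case=> //.
- by move=> v _; rewrite mem_enum.
- by rewrite size_enum_ord size_map size_iota.
Qed.

Lemma inj_surj w : injn w -> forall v, exists2 i, i < n & w i = v.
Proof.
move=> hw v.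
have : v \in [seq w i | i <- iota 0 n] by rewrite (perm_mem (inj_perm_enum hw)) mem_enum.
by case/mapP => i; rewrite mem_iota add0n => /andP[_ hi] ->; exists i.
Qed.

Lemma pairmap_map (w : nat -> 'I_n) a m :
  pairmap (fun u v => [set u; v]) (w a) [seq w i | i <- iota a.+1 m] =
  [seq [set w k; w k.+1] | k <- iota a m].
Proof. by elim: m a => [|m IH] a //=; rewrite IH. Qed.

Lemma map_nth_shift (T : Type) (d y : T) s :
  [seq nth d (y :: s) i | i <- iota 1 (size s)] = s.
Proof.
rewrite -(addn0 1) iotaDl -map_comp -[RHS](mkseq_nth d) /mkseq.
by apply: eq_map => i /=.
Qed.

Lemma path_char E : 0 < n ->
  is_path_graph E <-> exists w, injn w /\ perm_eq E (pm w).
Proof.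
move=> hn; split.
  case=> v0 [p [hp hE]].
  have hsz : size (v0 :: p) = n by rewrite (perm_size hp) size_enum_ord.
  have U : uniq (v0 :: p) by rewrite (perm_uniq hp) enum_uniq.
  exists (fun k => nth v0 (v0 :: p) k); split.
    by move=> i j hi hj /eqP; rewrite nth_uniq ?hsz // => /eqP.
  have hs : size p = n.-1 by apply/eqP; rewrite -eqSS prednK //; apply/eqP.
  by rewrite /pm -pairmap_map /= -hs map_nth_shift.
case=> w [hw hE]; exists (w 0), [seq w i | i <- iota 1 n.-1]; split.
  have e : iota 0 n = 0 :: iota 1 n.-1 by rewrite -{1}(prednK hn).
  by have := inj_perm_enum hw; rewrite e.
by rewrite pairmap_map.
Qed.

End Generic.

Section Forward.
Variable n : nat.
Variables f g : 'I_n -> 'I_n.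
Hypothesis hf : involutive f.
Hypothesis hg : involutive g.
Variable s : {perm 'I_n}.
Hypothesis hs : forall i, s i = f (g i).

Definition hb (b : bool) := if b then f else g.
Lemma hb_inv b : involutive (hb b). Proof. by case: b. Qed.

Lemma arcs_hb b u : hb b u != u -> [set u; hb b u] \in arcs f ++ arcs g.
Proof.
by case: b => /= h; rewrite mem_cat arcs_mem ?orbT.
Qed.

Lemma arcs_hbP e : e \in arcs f ++ arcs g ->
  exists b u, hb b u != u /\ e = [set u; hb b u].
Proof.
by rewrite mem_cat => /orP[] /mem_arcsP [u [hu ->]];
  [exists true | exists false]; exists u.
Qed.

Lemma orbit_closed x y b : y \in porbit s x -> hb b (hb (~~ b) y) \in porbit s x.
Proof.
move=> hy; have eq1 : porbit s y = porbit s x by apply/eqP; rewrite eq_porbit_mem.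
case: b => /=.
  rewrite -hs -eq1 -(porbit_perm s 1 y) expg1; exact: porbit_id.
have -> : g (f y) = (s^-1)%g y.
  by apply: (@perm_inj _ s); rewrite permKV hs hg hf.
have E2 := porbit_perm s 1 ((s^-1)%g y); rewrite expg1 permKV in E2.
rewrite -eq1 E2; exact: porbit_id.
Qed.

Lemma forward w : 0 < n -> injn w -> perm_eq (arcs f ++ arcs g) (pm w) ->
  forall i, porbit s i = [set: 'I_n].
Proof.
move=> hn hw hE.
have edge_step : forall k, k.+1 < n -> exists b, hb b (w k) = w k.+1.
  move=> k hk.
  have : [set w k; w k.+1] \in pm w by apply/mapP; exists k; rewrite // mem_iota; lia.
  rewrite -(perm_mem hE) => /arcs_hbP [b [u [hu e]]].
  by exists b; apply: (set_edge (hb_inv b) e).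
pose c := f (w 0) == w 1.
pose bit k := c (+) odd k.
have bitS : forall k, bit k.+1 = ~~ bit k by move=> k; rewrite /bit /= addbN.
have alt : forall k, k.+1 < n -> hb (bit k) (w k) = w k.+1.
  elim=> [|k IH] hk.
    rewrite /bit addbF /c; case hc : (f (w 0) == w 1); first by apply/eqP.
    have [[] hb0] := edge_step 0 hk => //.
    by move: hc; rewrite /= in hb0; rewrite hb0 eqxx.
  have [b hb1] := edge_step k.+1 hk.
  have IH' := IH (ltnW hk).
  case: (eqVneq b (bit k)) => hbk.
    have : w k = w k.+2.
      by rewrite -hb1 hbk -IH' hb_inv.
    move/hw; lia.
  have -> : bit k.+1 = b by rewrite bitS; move: hbk; case: (b) (bit k) => [] [].
  exact: hb1.
have fixp : 1 < n -> hb (~~ c) (w 0) = w 0.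
  move=> h1; apply/eqP; apply/negPn/negP => hne.
  have : [set w 0; hb (~~ c) (w 0)] \in pm w by rewrite -(perm_mem hE) arcs_hb.
  case/mapP => k; rewrite mem_iota add0n => /andP[_ hk] /set2_eqE [[e1 e2]|[e1 e2]];
    last by have := hw 0 k.+1 hn ltac:(lia) e1; lia.
  have k0 : 0 = k by apply: (hw 0 k hn ltac:(lia) e1).
  subst k.
  have a0 := alt 0 h1; rewrite /bit addbF in a0.
  case: (ltnP 2 n) => h3.
    have a1 := alt 1 h3; rewrite /bit addbT in a1.
    have : w 0 = w 2 by rewrite -a1 -e2 hb_inv.
    by move/hw; lia.
  have hn2 : n.-1 = 1 by lia.
  have Hsum : size (arcs f) + size (arcs g) = 1.
    by have := perm_size hE; rewrite /pm size_cat (size_map _ (iota 0 n.-1)) size_iota hn2.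
  have hne1 : w 1 != w 0 by apply/eqP => /hw; lia.
  have Hf : f (w 0) = w 1 by case: (c) a0 e2 => /= <- <-.
  have Hg : g (w 0) = w 1 by case: (c) a0 e2 => /= <- <-.
  have mf := @arcs_mem n f (w 0) hf; have mg := @arcs_mem n g (w 0) hg.
  rewrite Hf in mf; rewrite Hg in mg.
  have sz : forall (x : {set 'I_n}) (s : seq {set 'I_n}), x \in s -> 0 < size s by move=> x [].
  have := sz _ _ (mf hne1); have := sz _ _ (mg hne1); lia.
set O := porbit s (w 0).
have all : forall k, (k < n -> w k \in O) /\ (k.+1 < n -> w k.+1 \in O).
  elim=> [|k [IH1 IH2]].
    split; first by move=> _; exact: porbit_id.
    move=> h1; rewrite -(alt 0 h1) /bit addbF.
    by have := orbit_closed c (porbit_id s (w 0)); rewrite fixp.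
  split => // hk.
  rewrite -(alt k.+1 hk) -(alt k (ltnW hk)) bitS.
  by have := orbit_closed (~~ bit k) (IH1 (ltn_trans (ltnSn k) (ltnW hk))); rewrite negbK.
have OT : O = [set: 'I_n].
  apply/setP => v; rewrite inE.
  by have [i hi <-] := inj_surj hw v; case: (all i) => ->.
by move=> i; rewrite -OT /O; apply/eqP; rewrite eq_porbit_mem -/O OT inE.
Qed.

End Forward.

Section Backward.
Variable n : nat.
Variables f g : 'I_n -> 'I_n.
Hypothesis hf : involutive f.
Hypothesis hg : involutive g.
Variable s : {perm 'I_n}.
Hypothesis hs : forall i, s i = f (g i).
Hypothesis hfull : forall i, porbit s i = [set: 'I_n].

Let sinv y := g (f y).

Lemma key y m : 0 < m -> m < n -> iter m s y = y -> False.
Proof.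
move=> h0 hm e.
have U := uniq_traject_porbit s y; rewrite hfull cardsT card_ord in U.
have := @nth_uniq _ y (traject s y n) 0 m ltac:(rewrite size_traject; lia) ltac:(rewrite size_traject; lia) U.
rewrite (nth_traject _ (ltn_trans h0 hm)) (nth_traject _ hm).
move=> H; have : iter 0 s y == iter m s y by apply/eqP; symmetry; exact: e.
by rewrite H => /eqP; lia.
Qed.

Lemma iter_ssinv m y : iter m s (iter m sinv y) = y.
Proof.
elim: m y => [|m IH] y //.
by rewrite iterSr iterS /sinv hs hg hf IH.
Qed.

Lemma iter_sinvs m y : iter m sinv (iter m s y) = y.
Proof.
elim: m y => [|m IH] y //.
by rewrite iterSr iterS /sinv hs hf hg IH.
Qed.

Lemma g_iter a y : g (iter a s y) = iter a sinv (g y).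
Proof. by elim: a => [|a IH] //=; rewrite hs /sinv -IH. Qed.

Lemma f_iter a y : f (iter a sinv y) = iter a s (f y).
Proof. by elim: a => [|a IH] //=; rewrite /sinv hs -IH. Qed.

Lemma fixed_exists : 0 < n -> exists e, g e = e \/ f e = e.
Proof.
move=> hn; pose c := Ordinal hn.
have : g c \in porbit s c by rewrite hfull inE.
case/porbitP => m; rewrite permX => hm.
have := odd_double_half m; set a := m./2; clearbody a.
case: (odd m) => /= hmE; subst m.
  exists (iter a.+1 s c); right.
  have -> : f (iter a.+1 s c) = s (g (iter a.+1 s c)) by rewrite hs hg.
  by rewrite g_iter hm add1n -addnn -addSn iterD iter_sinvs.
exists (iter a s c); left.
by rewrite g_iter hm add0n -addnn iterD iter_sinvs.
Qed.

Lemma uniq_arcs (phi : 'I_n -> 'I_n) : uniq (arcs phi).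
Proof.
rewrite map_inj_in_uniq; first by rewrite filter_uniq //; exact: enum_uniq.
move=> u v.
rewrite !mem_filter => /andP[hu _] /andP[hv _] /set2_eqE [[]|[e1 e2]] //.
rewrite e2 in hu; rewrite -e1 in hv.
by move: (ltn_trans hu hv); rewrite ltnn.
Qed.

Lemma uniq_pm (w : nat -> 'I_n) : injn w -> uniq (pm w).
Proof.
move=> hw; rewrite map_inj_in_uniq ?iota_uniq // => k1 k2.
rewrite !mem_iota !add0n => /andP[_ h1] /andP[_ h2] /set2_eqE [[e1 _]|[e1 e2]].
  exact: hw k1 k2 ltac:(lia) ltac:(lia) e1.
have := hw k1 k2.+1 ltac:(lia) ltac:(lia) e1; have := hw k1.+1 k2 ltac:(lia) ltac:(lia) e2; lia.
Qed.

Fixpoint walk (e : 'I_n) (k : nat) : 'I_n :=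
  match k with 0 => e | k'.+1 => hb f g (~~ odd k') (walk e k') end.

Lemma cycle_path e : g e = e -> 0 < n ->
  exists w, injn w /\ perm_eq (arcs f ++ arcs g) (pm w).
Proof.
move=> he hn.
pose w := walk e.
have wS : forall k, w k.+1 = hb f g (~~ odd k) (w k) by [].
have closed : forall k, w (k.*2) = iter k sinv e /\ w (k.*2).+1 = iter k.+1 s e.
  elim=> [|k [IH1 IH2]]; first by rewrite /= hs he.
  have E1 : w (k.+1.*2) = iter k.+1 sinv e.
    by rewrite doubleS wS /= odd_double /= IH2 g_iter he.
  split => //.
  rewrite wS E1 doubleS (_ : odd (k.*2).+2 = false); last by rewrite /= odd_double.
  change (hb f g (~~ false)) with f; rewrite f_iter.
  have -> : f e = s e by rewrite hs he.
  by rewrite -iterSr.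
have walkE : forall i, w i = if odd i then iter (i./2).+1 s e else iter (i./2) sinv e.
  move=> i; rewrite -{1}(odd_double_half i); case: (odd i) => /=.
    by rewrite add1n; exact: (closed _).2.
  by rewrite add0n; exact: (closed _).1.
have LL0 : forall a b, a < b -> b < n -> iter a sinv e = iter b sinv e -> False.
  move=> a b hab hb E; apply: (@key (iter b sinv e) (b - a)); [lia | lia | ].
  move: E.
  have -> : iter b sinv e = iter (b - a) sinv (iter a sinv e) by rewrite -iterD; congr iter; lia.
  by rewrite iter_ssinv.
have RR0 : forall a b, a < b -> b < n -> iter a.+1 s e = iter b.+1 s e -> False.
  move=> a b hab hb E; apply: (@key (iter a.+1 s e) (b - a)); [lia | lia | ].
  by rewrite -iterD (_ : b - a + a.+1 = b.+1) ?E //; lia.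
have LR : forall a b, a + b.+1 < n -> iter a sinv e = iter b.+1 s e -> False.
  move=> a b hab E; apply: (@key (iter a sinv e) (b.+1 + a)); [lia | lia | ].
  by rewrite iterD iter_ssinv E.
have hw : injn w.
  move=> i j hi hj; rewrite !walkE.
  have hI := odd_double_half i; have hJ := odd_double_half j.
  have fin : i./2 = j./2 -> odd i = odd j -> i = j.
    by move=> h1 h2; rewrite -(odd_double_half i) -(odd_double_half j) h1 h2.
  case hoi : (odd i); case hoj : (odd j); rewrite hoi hoj /= in hI hJ => E.
  - apply: fin; last by rewrite hoi hoj.
    case: (ltngtP i./2 j./2) => // h; exfalso.
      by apply: (RR0 _ _ h _ E); rewrite -muln2 in hJ; lia.
    by apply: (RR0 _ _ h _ (esym E)); rewrite -muln2 in hI; lia.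
  - by exfalso; apply: (LR j./2 i./2 _ (esym E)); rewrite -!muln2 in hI hJ; lia.
  - by exfalso; apply: (LR i./2 j./2 _ E); rewrite -!muln2 in hI hJ; lia.
  - apply: fin; last by rewrite hoi hoj.
    case: (ltngtP i./2 j./2) => // h; exfalso.
      by apply: (LL0 _ _ h _ E); rewrite -muln2 in hJ; lia.
    by apply: (LL0 _ _ h _ (esym E)); rewrite -muln2 in hI; lia.
exists w; split => //.
have wback : forall k, hb f g (~~ odd k) (w k.+1) = w k.
  by move=> k; rewrite wS (hb_inv hf hg).
have neq : forall k, k.+1 < n -> w k.+1 != w k.
  by move=> k hk; apply/eqP => /hw; lia.
apply: uniq_perm.
- rewrite cat_uniq !uniq_arcs andbT /=.
  apply/hasPn => z hz; apply/negP => hz'.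
  have [u [hu ez]] := mem_arcsP hz.
  have [v [hv ez']] := mem_arcsP hz'.
  have fu : f u = g u by apply: (@set_edge _ _ _ _ v hf); rewrite -ez ez'.
  have h1n : 1 < n.
    have := ltn_ord u; have := ltn_ord (g u); move: hu; rewrite -val_eqE /=; lia.
  apply: (@key (g u) 1) => //.
  by rewrite /= hs hg fu.
- exact: uniq_pm.
move=> z; apply/idP/idP.
  have edge_in : forall b i, i < n -> hb f g b (w i) != w i ->
      ~~ ((i == n.-1) && (b == ~~ odd i)) -> [set w i; hb f g b (w i)] \in pm w.
    move=> b' i' hi' hne hbad.
    case: (eqVneq b' (~~ odd i')) => hb'.
      rewrite hb' eqxx andbT in hbad.
      have hi1 : i'.+1 < n by lia.
      apply/mapP; exists i'; first by rewrite mem_iota; lia.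
      by rewrite hb' -wS.
    case: i' hi' hne hbad hb' => [|j] hj hne hbad hb'.
      have eb : b' = false by move: hb'; case: (b').
      by move: hne; rewrite eb /= he eqxx.
    have eb : b' = ~~ odd j by move: hb'; rewrite /= negbK; case: (b') (odd j) => [] [].
    rewrite eb wback setUC.
    by apply/mapP; exists j; first by rewrite mem_iota; lia.
  case/arcs_hbP => b [u [hu ->]].
  have [i hi ei] := inj_surj hw u; subst u.
  case hbadc : ((i == n.-1) && (b == ~~ odd i)); last by apply: edge_in => //; rewrite hbadc.
  have [j hj ej] := inj_surj hw (hb f g b (w i)).
  have hji : j != i by apply/eqP => eji; move: hu; rewrite -ej eji eqxx.
  have := edge_in b j hj.
  rewrite ej (hb_inv hf hg) setUC eq_sym hu => H; apply: H => //.
  have hi' : i = n.-1 by move: hbadc => /andP[/eqP -> _].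
  apply/negP => /andP[/eqP hj' _].
  by move/eqP: hji; apply; lia.
case/mapP => k; rewrite mem_iota add0n => /andP[_ hk] ->.
rewrite wS; apply: (arcs_hb hf hg); rewrite -wS; apply: neq; lia.
Qed.

End Backward.

Theorem theorem4p5 (n : nat) (x y : seq nat) :
  1 <= n -> sumn x = n -> sumn y = n ->
  (is_path_graph (meander_edges n x y) <-> is_full_cycle (meander_perm n x y)).
Proof.
move=> hn hx hy.
have hf := bf_inv hx; have hg := bf_inv hy.
have hs : forall i, meander_perm n x y i = block_fun x (block_fun y i).
  by move=> i; exact: meander_permE.
rewrite /meander_edges !arc_edgesE (path_char _ hn).
split.
  by case=> w [hw hE]; exact: (forward hf hg hs hn hw hE).
move=> hfull.
have [e [he|he]] := fixed_exists hf hg hs hfull hn.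
  exact: (cycle_path hf hg hs hfull he hn).
set s := meander_perm n x y.
have hs' : forall i, (s^-1)%g i = block_fun y (block_fun x i).
  by move=> i; apply: (@perm_inj _ s); rewrite permKV hs hg hf.
have hfull' : forall i, porbit (s^-1)%g i = [set: 'I_n].
  by move=> i; rewrite porbitV; exact: hfull.
have [w [hw hE]] := cycle_path hg hf hs' hfull' he hn.
by exists w; split => //; rewrite perm_catC.
Qed.
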